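(* For every positive integer $d$ there is a convex lattice polytope in $\mathbb{R}^d$ (all vertices in $\mathbb{Z}^d$) with at least $2d$ vertices, containing no point of $\mathbb{Z}^d$ in its interior, all of whose facets are simplices. *)

(* Defs.v *)
From HB Require Import structures.
From mathcomp Require Import all_boot all_order all_algebra.
From mathcomp Require Import all_classical all_reals topology normedtype.
Set Implicit Arguments. Unset Strict Implicit. Unset Printing Implicit Defensive.
Import Order.TTheory GRing.Theory Num.Theory.
Import numFieldNormedType.Exports.
Local Open Scope classical_set_scope.
Local Open Scope ring_scope.

(* Points of R^d are row vectors 'rV[R]_d, with the usual (product/sup-norm)
   topology of MathComp-Analysis. *)
Section Polytopes.
Variables (R : realType) (d : nat).
Implicit Types (V S : seq 'rV[R]_d) (x y : 'rV[R]_d).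

Definition dotv (a x : 'rV[R]_d) : R := (a *m x^T) 0 0.

Definition intvec (z : 'rV[int]_d) : 'rV[R]_d := map_mx (fun k : int => k%:~R) z.

Definition conv S : set 'rV[R]_d :=
  [set x | exists l : 'I_(size S) -> R,
     (forall i, 0 <= l i) /\ \sum_i l i = 1 /\ x = \sum_i l i *: S`_i].

Definition extreme (P : set 'rV[R]_d) x : Prop :=
  P x /\ forall y z (t : R), P y -> P z -> 0 < t < 1 ->
    x = t *: y + (1 - t) *: z -> y = x /\ z = x.

Definition aff_indep S : Prop :=
  forall l : 'I_(size S) -> R, \sum_i l i = 0 -> \sum_i l i *: S`_i = 0 ->
    forall i, l i = 0.

Definition supporting (P : set 'rV[R]_d) (a : 'rV[R]_d) (b : R) : Prop :=
  a != 0 /\ (forall x, P x -> dotv a x <= b) /\ (exists x, P x /\ dotv a x = b).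

Definition face_verts V (a : 'rV[R]_d) (b : R) : seq 'rV[R]_d :=
  [seq v <- V | dotv a v == b].

(* the face of conv V cut out by the supporting hyperplane <a,x> = b is a
   facet, i.e. has dimension d-1 (it contains d affinely independent vertices) *)
Definition is_facet V (a : 'rV[R]_d) (b : R) : Prop :=
  supporting (conv V) a b /\
  exists s, {subset s <= face_verts V a b} /\ size s = d /\ aff_indep s.

Definition simplicial V : Prop :=
  forall a b, is_facet V a b -> aff_indep (face_verts V a b).

End Polytopes.

(* Main.v *)
Require Import Defs.
From HB Require Import structures.
From mathcomp Require Import all_boot all_order all_algebra.
From mathcomp Require Import all_classical all_reals topology normedtype.
From mathcomp Require Import ring lra.
Import Order.TTheory GRing.Theory Num.Theory.
Import numFieldNormedType.Exports.
Local Open Scope classical_set_scope.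
Local Open Scope ring_scope.

Definition condw {n : nat} (i j : 'I_n.+1) : bool := (i == j) && (i != ord0).
Definition wf (R : realType) {n : nat} (i j : 'I_n.+1) : R :=
  if condw i j then -1 else 1.
Definition sg (R : realType) (b : bool) : R := if b then 1 else -1.
Definition vint {n : nat} (t : bool * 'I_n.+1) : 'rV[int]_n.+1 :=
  \row_j (if addb t.1 (condw t.2 j) then 1 else 0).
Definition hh (R : realType) {n : nat} (t : bool * 'I_n.+1) : 'rV[R]_n.+1 :=
  intvec R (vint t).

Lemma hE {R : realType} n (t : bool * 'I_n.+1) j :
  hh R t 0 j = if addb t.1 (condw t.2 j) then 1 else 0.
Proof. by rewrite /hh /intvec !mxE; case: ifP. Qed.

Lemma hE' {R : realType} n (t : bool * 'I_n.+1) j :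
  hh R t 0 j = 1/2 + sg R t.1 * wf R t.2 j / 2.
Proof. rewrite hE /sg /wf; case: t.1; case: condw => /=; lra. Qed.

Lemma dotE {R : realType} d (a x : 'rV[R]_d) : dotv a x = \sum_j a 0 j * x 0 j.
Proof. by rewrite /dotv !mxE; apply: eq_bigr => j _; rewrite mxE. Qed.

Lemma wf_sym {R : realType} n (i j : 'I_n.+1) : wf R i j = wf R j i.
Proof.
rewrite /wf /condw; have [->|ne] := eqVneq i j; first by [].
by [].
Qed.

Lemma LI {R : realType} n (lam : 'I_n.+1 -> R) :
  (forall j, \sum_i lam i * wf R i j = 0) -> forall i, lam i = 0.
Proof.
move=> H.
have key j : \sum_i lam i * wf R i j =
   \sum_i lam i - (if j != ord0 then 2 * lam j else 0).
  have -> : (if j != ord0 then 2 * lam j else 0) =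
      \sum_i (if condw i j then 2 * lam i else 0).
    rewrite (bigD1 j) //= big1 ?addr0.
      by rewrite /condw eqxx.
    by move=> i ne; rewrite /condw (negbTE ne).
  rewrite -sumrB; apply: eq_bigr => i _; rewrite /wf.
  by case: condw; ring.
have S0 : \sum_i lam i = 0 by have := H ord0; rewrite key eqxx /= subr0.
have Hj j : j != ord0 -> lam j = 0.
  move=> nj; have := H j; rewrite key nj S0; lra.
move=> i; have [->|] := eqVneq i ord0; last exact: Hj.
move: S0; rewrite (bigD1 ord0) //= big1 ?addr0 //.
Qed.

Lemma conv_sum {R : realType} d (T : Type) (t0 : T) (s : seq T)
  (h : T -> 'rV[R]_d) (lam : T -> R) :
  (forall t, 0 <= lam t) -> \sum_(t <- s) lam t = 1 ->
  conv (map h s) (\sum_(t <- s) lam t *: h t).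
Proof.
move=> l0 l1.
have E (V : nmodType) (F : T -> V) :
    \sum_(k < size (map h s)) F (nth t0 s k) = \sum_(t <- s) F t.
  by rewrite (big_nth t0) big_mkord size_map.
exists (fun k => lam (nth t0 s k)); split => //; split; first by rewrite E.
rewrite -E; apply: eq_bigr => k _; rewrite (nth_map t0) //.
by rewrite -(size_map h).
Qed.

Lemma conv_mem {R : realType} d (S : seq 'rV[R]_d) v : v \in S -> conv S v.
Proof.
move=> vS; have hk : (index v S < size S)%N by rewrite index_mem.
exists (fun i => (i == Ordinal hk)%:R); split; first by move=> i; case: eqP.
split.
  rewrite (bigD1 (Ordinal hk)) //= eqxx big1 ?addr0 //.
  by move=> i /negbTE ->.
rewrite (bigD1 (Ordinal hk)) //= eqxx scale1r big1 ?addr0 ?nth_index //.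
by move=> i /negbTE ->; rewrite scale0r.
Qed.

Lemma conv_cube {R : realType} d (S : seq 'rV[R]_d) x :
  (forall v, v \in S -> forall j, 0 <= v 0 j <= 1) -> conv S x ->
  forall j, 0 <= x 0 j <= 1.
Proof.
move=> HS [l [l0 [l1 ->]]] j.
rewrite summxE; apply/andP; split.
  apply: sumr_ge0 => k _; rewrite mxE; apply: mulr_ge0 => //.
  by case/andP: (HS _ (mem_nth 0 (ltn_ord k)) j).
rewrite -l1; apply: ler_sum => k _; rewrite mxE.
case/andP: (HS _ (mem_nth 0 (ltn_ord k)) j) => _ h1.
by rewrite -{2}(mulr1 (l k)) ler_wpM2l.
Qed.

Lemma sumT (V : nmodType) n (F : bool * 'I_n.+1 -> V) :
  \sum_(t <- enum {: bool * 'I_n.+1}) F t =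
  \sum_i F (true, i) + \sum_i F (false, i).
Proof.
rewrite big_enum /= -(big_bool _ (fun b => \sum_i F (b, i))) pair_bigA /=.
by apply: eq_bigr => -[].
Qed.

Lemma dot_hh {R : realType} n (a : 'rV[R]_n.+1) t :
  dotv a (hh R t) = \sum_j a 0 j / 2 + sg R t.1 * (\sum_j a 0 j * wf R t.2 j / 2).
Proof.
rewrite dotE mulr_sumr -big_split; apply: eq_bigr => j _ /=.
rewrite hE'; ring.
Qed.

Definition WW (R : realType) n := map (hh R) (enum {: bool * 'I_n.+1}).

Lemma hh01 {R : realType} {n} (t : bool * 'I_n.+1) j :
  hh R t 0 j = 0 \/ hh R t 0 j = 1.
Proof. by rewrite hE; case: ifP; [right|left]. Qed.

Lemma WW_cube {R : realType} n v : v \in WW R n -> forall j, 0 <= v 0 j <= 1.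
Proof.
case/mapP => t _ vE j; rewrite vE; have [E|E] := @hh01 R n t j; rewrite E ?lexx ?ler01 //.
Qed.

Lemma vint_inj n : injective (@vint n).
Proof.
move=> [b i] [b' i'] E.
have Ej j : addb b (condw i j) = addb b' (condw i' j).
  have := congr1 (fun M : 'M[int]_(1, n.+1) => M 0 j) E; rewrite !mxE /=.
  by do 2 case: ifP => _ //.
have bb : b = b'.
  have c0 k : condw k ord0 = false.
    by rewrite /condw; case: (eqVneq k ord0).
  by have := Ej ord0; rewrite !c0 !addbF.
subst b'; have Cj j := addbI (Ej j).
have [->|ne] := eqVneq i i'; first by [].
exfalso.
have [i0|i0] := eqVneq i ord0.
  have [i'0|i'0] := eqVneq i' ord0; first by rewrite i0 i'0 eqxx in ne.
  by have := Cj i'; rewrite /condw i0 !eqxx andbF i'0.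
by have := Cj i; rewrite /condw eqxx i0 [i' == i]eq_sym (negbTE ne).
Qed.

Lemma extr_aux {R : realType} {t a b c : R} :
  0 < t < 1 -> 0 <= a <= 1 -> 0 <= b <= 1 -> (c = 0 \/ c = 1) ->
  c = t * a + (1 - t) * b -> a = c /\ b = c.
Proof.
move=> /andP[t0 t1] /andP[a0 a1] /andP[b0 b1] [->|->] E.
  have h1 : 0 <= t * a by apply: mulr_ge0; lra.
  have h2 : 0 <= (1 - t) * b by apply: mulr_ge0; lra.
  have ta : t * a = 0 by lra.
  have tb : (1 - t) * b = 0 by lra.
  move/eqP: ta; rewrite mulf_eq0 => /orP[/eqP|/eqP]; try lra.
  move/eqP: tb; rewrite mulf_eq0 => /orP[/eqP|/eqP]; lra.
have h1 : 0 <= t * (1 - a) by apply: mulr_ge0; lra.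
have h2 : 0 <= (1 - t) * (1 - b) by apply: mulr_ge0; lra.
have ta : t * (1 - a) = 0 by lra.
have tb : (1 - t) * (1 - b) = 0 by lra.
move/eqP: ta; rewrite mulf_eq0 => /orP[/eqP|/eqP]; try lra.
move/eqP: tb; rewrite mulf_eq0 => /orP[/eqP|/eqP]; lra.
Qed.

Lemma comb_entry (R : realType) m (y z : 'rV[R]_m) (t : R) j :
  (t *: y + (1 - t) *: z) 0 j = t * y 0 j + (1 - t) * z 0 j.
Proof. by rewrite !mxE. Qed.

Lemma WW_extreme {R : realType} n v : v \in WW R n -> extreme (conv (WW R n)) v.
Proof.
move=> vW; split; first exact: conv_mem.
move=> y z t yC zC t01 E.
have yc := @conv_cube R n.+1 _ _ (@WW_cube R n) yC.
have zc := @conv_cube R n.+1 _ _ (@WW_cube R n) zC.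
have v01 j : v 0 j = 0 \/ v 0 j = 1.
  by case/mapP: vW => s _ ->; exact: hh01.
have Ej j : v 0 j = t * y 0 j + (1 - t) * z 0 j.
  have E' : v = t *: y + (1 - t) *: z := E.
  by rewrite E' comb_entry.
split; apply/rowP => j.
  by case: (extr_aux t01 (yc j) (zc j) (v01 j) (Ej j)).
by case: (extr_aux t01 (yc j) (zc j) (v01 j) (Ej j)).
Qed.

Lemma aux_sum {R : realType} (I : finType) (l c : I -> R) :
  \sum_k l k * (1/2 + c k / 2) = (\sum_k l k) / 2 + (\sum_k l k * c k) / 2.
Proof. rewrite !mulr_suml -big_split; apply: eq_bigr => k _ /=; ring. Qed.

Lemma WW_simp {R : realType} n (a : 'rV[R]_n.+1) b :
  a != 0 -> (forall t, dotv a (hh R t) <= b) ->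
  aff_indep (face_verts (WW R n) a b).
Proof.
move=> a0 Hb.
set A := \sum_j a 0 j / 2.
set B := fun i => \sum_j a 0 j * wf R i j / 2.
have dt t : dotv a (hh R t) = A + sg R t.1 * B t.2 by rewrite dot_hh.
have both i : dotv a (hh R (true, i)) = b -> dotv a (hh R (false, i)) = b -> False.
  rewrite !dt /sg /= => e1 e2.
  have Bj j : B j = 0.
    by have := Hb (true, j); have := Hb (false, j); rewrite !dt /sg /=; lra.
  move/negP: a0; apply; apply/eqP/rowP => j; rewrite mxE.
  apply: (@LI R n (fun j => a 0 j)) => k.
  have := Bj k; rewrite /B -mulr_suml.
  under eq_bigr => x _ do rewrite wf_sym.
  lra.
rewrite /aff_indep /face_verts /WW filter_map.
set s := seq.filter _ (enum _).
move=> l Hl0 Hl k0.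
have us : uniq s by rewrite filter_uniq // enum_uniq.
pose tk (k : 'I_(size (map (hh R) s))) := nth (true, ord0) s k.
have ks (k : 'I_(size (map (hh R) s))) : (k < size s)%N.
  by rewrite -(size_map (hh R)).
have nthE (k : 'I_(size (map (hh R) s))) : (map (hh R) s)`_k = hh R (tk k).
  by rewrite (nth_map (true, ord0) _ _ (ks k)).
have onf k : dotv a (hh R (tk k)) = b.
  have : tk k \in s by rewrite mem_nth.
  by rewrite mem_filter => /andP[/eqP ? _].
have inj k k' : (tk k).2 = (tk k').2 -> k = k'.
  move=> e; apply/val_inj/eqP.
  rewrite -(nth_uniq (true, ord0) (ks k) (ks k') us); apply/eqP.
  rewrite -/(tk k) -/(tk k').
  have o1 := onf k; have o2 := onf k'.
  move: e o1 o2; case: (tk k) => [b1 i1]; case: (tk k') => [b2 i2] /= e.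
  subst i2; case: b1; case: b2 => //= o1 o2; exfalso; exact: (both i1).
have Ej j : \sum_k l k * (sg R (tk k).1 * wf R (tk k).2 j) = 0.
  have := congr1 (fun M : 'rV[R]_n.+1 => M 0 j) Hl; rewrite summxE mxE /=.
  under eq_bigr => k _ do rewrite mxE nthE hE'.
  rewrite aux_sum Hl0; lra.
pose lam i := \sum_k (if i == (tk k).2 then l k * sg R (tk k).1 else 0).
have Lj j : \sum_i lam i * wf R i j = 0.
  rewrite -[RHS](Ej j).
  transitivity (\sum_i \sum_k (if i == (tk k).2 then l k * sg R (tk k).1 * wf R i j else 0)).
    apply: eq_bigr => i _; rewrite /lam mulr_suml; apply: eq_bigr => k _.
    by case: ifP; rewrite ?mul0r.
  rewrite exchange_big; apply: eq_bigr => k _.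
  by rewrite -big_mkcond big_pred1_eq mulrA.
have := @LI R n lam Lj (tk k0).2.
rewrite /lam (bigD1 k0) //= eqxx big1 ?addr0.
  move/eqP; rewrite mulf_eq0 /sg; case: (tk k0).1 => /=;
    rewrite ?oppr_eq0 ?oner_eq0 orbF => /eqP //.
move=> k nk; case: eqP => // e.
by rewrite (inj _ _ e) eqxx in nk.
Qed.

Lemma WW_nolat {R : realType} n (z : 'rV[int]_n.+1) :
  ~ (conv (WW R n))° (intvec R z).
Proof.
move=> /nbhs_ballP [e e0' He]; have e0 : 0 < e := e0'.
have C x : ball (intvec R z) e x -> forall j, 0 <= x 0 j <= 1.
  move=> h; exact: (@conv_cube R n.+1 _ _ (@WW_cube R n) (He _ h)).
have zE : intvec R z 0 ord0 = (z 0 ord0)%:~R by rewrite mxE.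
have [hk|hk] := lerP (z 0 ord0) 0.
  have hk' : ((z 0 ord0)%:~R : R) <= 0 by rewrite lerz0.
  have hy : ball (intvec R z) e (\row_j (intvec R z 0 j - e / 2)).
    split => // i j; rewrite /ball /= mxE.
    have -> : intvec R z i j - (intvec R z 0 j - e / 2) = e / 2.
      by rewrite (ord1 i); ring.
    rewrite ger0_norm; lra.
  have := C _ hy ord0; rewrite mxE zE => /andP[h _]; lra.
have hk' : 1 <= ((z 0 ord0)%:~R : R) by rewrite ler1z -gtz0_ge1.
have hy : ball (intvec R z) e (\row_j (intvec R z 0 j + e / 2)).
  split => // i j; rewrite /ball /= mxE.
  have -> : intvec R z i j - (intvec R z 0 j + e / 2) = - (e / 2).
    by rewrite (ord1 i); ring.
  rewrite normrN ger0_norm; lra.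
have := C _ hy ord0; rewrite mxE zE => /andP[_ h]; lra.
Qed.

Lemma WW_int {R : realType} n : exists x, (conv (WW R n))° x.
Proof.
pose N : R := n.+1%:R.
have N0 : 0 < N by rewrite /N ltr0Sn.
pose dl : R := (4 * N)^-1.
have dl0 : 0 < dl by rewrite /dl invr_gt0 mulr_gt0.
have dlN : dl * 2 * N = 1 / 2.
  by rewrite /dl; field; rewrite paddr_eq0 ?ler01 ?ler0n // oner_eq0.
have dl1 : dl <= 1 / 4.
  have N1 : 1 <= N by rewrite /N ler1n.
  nra.
exists (\row_j (if j == ord0 then dl else 2 * dl)).
apply/nbhs_ballP; exists (dl / 2); first by rewrite /= divr_gt0.
move=> y [_ Hy].
have Hj j : `|(if j == ord0 then dl else 2 * dl) - y 0 j| < dl / 2.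
  by have := Hy 0 j; rewrite /ball /= mxE.
pose y0 := y 0 ord0.
have hy0 : dl / 2 < y0 < 3 * dl / 2.
  by have := Hj ord0; rewrite eqxx ltr_norml /y0; move=> /andP[h1 h2]; apply/andP; split; lra.
have hyj j : j != ord0 -> 3 * dl / 2 < y 0 j < 5 * dl / 2.
  by move=> /negbTE nj; have := Hj j; rewrite nj ltr_norml => /andP[h1 h2]; apply/andP; split; lra.
pose g i := if i == ord0 then 0 else y 0 i - y0.
pose G := \sum_i g i.
pose lam (t : bool * 'I_n.+1) : R := if t.1 then (if t.2 == ord0 then y0 else 0)
   else (if t.2 == ord0 then 1 - y0 - G else g t.2).
have g0 i : 0 <= g i.
  rewrite /g; case: eqP => [_|/eqP ni]; first by [].
  by have := hyj i ni; move: hy0 => /andP[? ?] /andP[? ?]; lra.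
have g1 i : g i <= 2 * dl.
  rewrite /g; case: eqP => [_|/eqP ni]; first lra.
  by have := hyj i ni; move: hy0 => /andP[? ?] /andP[? ?]; lra.
have GB : G <= 1 / 2.
  rewrite -dlN /G; apply: le_trans (ler_sum _ (fun i _ => g1 i)) _.
  by rewrite sumr_const card_ord -mulr_natr /N; lra.
have lam0 t : 0 <= lam t.
  case: t => [[] i]; rewrite /lam /=; case: eqP => _ //;
  by have := g0 i; move: hy0 => /andP[? ?]; lra.
have lam1 : \sum_(t <- enum {: bool * 'I_n.+1}) lam t = 1.
  rewrite sumT /lam /=.
  rewrite (eq_bigr (fun i => if i == ord0 then y0 else 0)); last by [].
  rewrite -big_mkcond big_pred1_eq.
  rewrite (eq_bigr (fun i => g i + (if i == ord0 then 1 - y0 - G else 0))).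
    by rewrite big_split /= -big_mkcond big_pred1_eq -/G; ring.
  by move=> i _; rewrite /g; case: eqP => _; ring.
have -> : y = \sum_(t <- enum {: bool * 'I_n.+1}) lam t *: hh R t.
  apply/rowP => j; rewrite summxE sumT.
  rewrite (eq_bigr (fun i => if i == ord0 then y0 else 0)); last first.
    move=> i _; rewrite mxE /lam /= hE /=; case: eqP => [->|_]; last by rewrite mul0r.
    by rewrite /condw eqxx andbF /= mulr1.
  rewrite -big_mkcond big_pred1_eq.
  rewrite (eq_bigr (fun i => if i == j then g i else 0)); last first.
    move=> i _; rewrite mxE /lam /= hE /= /condw.
    case: (eqVneq i ord0) => [->|ni] /=.
      by rewrite andbF mulr0 /g eqxx; case: ifP.
    by rewrite andbT; case: eqP => _; rewrite ?mulr1 ?mulr0.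
  rewrite -big_mkcond big_pred1_eq /g /y0.
  by case: (eqVneq j ord0) => [->|_]; ring.
rewrite /WW; exact: (@conv_sum R n.+1 _ (true, ord0) _ _ lam lam0 lam1).
Qed.

Theorem proposition16 (R : realType) (d : nat) (hd : (0 < d)%N) :
  exists V : seq 'rV[int]_d,
    let W := map (@intvec R d) V in
    uniq V /\
    (2 * d <= size V)%N /\
    (forall v, v \in W -> extreme (conv W) v) /\
    (exists x, (conv W)° x) /\
    (forall z : 'rV[int]_d, ~ (conv W)° (intvec R z)) /\
    simplicial W.
Proof.
case: d hd => // n _.
exists (map (@vint n) (enum {: bool * 'I_n.+1})).
have WE : map (@intvec R n.+1) (map vint (enum {: bool * 'I_n.+1})) = WW R n.
  by rewrite /WW -map_comp.
cbv zeta; rewrite WE.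
split; first by rewrite (map_inj_uniq (@vint_inj n)) enum_uniq.
split; first by rewrite size_map -cardE card_prod card_bool card_ord.
split; first by move=> v; exact: WW_extreme.
split; first exact: WW_int.
split; first by move=> z; exact: WW_nolat.
move=> a b [[a0 [Hs _]] _]; apply: WW_simp => // t.
by apply: Hs; apply: conv_mem; rewrite /WW map_f // mem_enum.
Qed.
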